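(* Let $L,N,K$ be finite simplicial complexes, let $\varphi: L\to N$ and $\psi: N\to K$ be surjective simplicial finite-fibrations, and let $n\ge2$. Then $\mathrm{TC}_n(\psi\circ\varphi)\le\min\{\mathrm{TC}_n(\varphi),\mathrm{TC}_n(\psi)\}$.
   Context: Simplicial complexes are abstract and edge-path connected; $X^n$ is the $n$-fold categorical product (vertex set $\mathrm{VX}(X)^n$; a set of vertices is a simplex iff each coordinate projection is a simplex). Simplicial maps $f,g: X\to Y$ are contiguous if $f(\sigma)\cup g(\sigma)$ is a simplex for every simplex $\sigma$; $f\sim g$ if joined by a finite chain of contiguous simplicial maps. $\mathrm{SD}(\varphi_1,\dots,\varphi_m)$ for simplicial maps $X\to Y$ is the least $k\ge0$ such that $X$ is a union of subcomplexes $X_0,\dots,X_k$ with $\varphi_i|_{X_j}\sim\varphi_l|_{X_j}$ for all $i,l,j$. For a surjective simplicial finite-fibration $\phi: X\to Y$, $\mathrm{TC}_n(\phi)=\mathrm{SD}(\phi\circ p_1,\dots,\phi\circ p_n)$ where $p_i: X^n\to X$ are the projections. $I_m$ is the complex with vertices $0,\dots,m$ and edges $\{i,i+1\}$; $\phi: X\to Y$ is a simplicial finite-fibration if for every finite complex $M$, $m\ge1$, inclusion $i: M\times\{0\}\to M\times I_m$ and simplicial $g: M\times\{0\}\to X$, $G: M\times I_m\to Y$ with $\phi\circ g=G\circ i$, there is simplicial $\widetilde G: M\times I_m\to X$ with $\widetilde G\circ i=g$, $\phi\circ\widetilde G=G$. *)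

(* Defs.v *)
From Stdlib Require Import ClassicalEpsilon Relation_Operators.
From mathcomp Require Import all_boot.
Set Implicit Arguments. Unset Strict Implicit. Unset Printing Implicit Defensive.

Definition is_complex (V : finType) (S : pred {set V}) : Prop :=
  [/\ forall s, S s -> s != set0,
      forall v : V, S [set v] &
      forall s t : {set V}, S s -> t \subset s -> t != set0 -> S t].

Definition edge_connected (V : finType) (S : pred {set V}) : Prop :=
  forall u v : V, connect (fun a b => S [set a; b]) u v.

Record fcomplex := FComplex {
  vtx : finType;
  simp : pred {set vtx};
  simp_complex : is_complex simp;
  simp_connected : edge_connected simp }.
Arguments simp : clear implicits.

Definition smap (V W : finType) (A : pred {set V}) (SY : pred {set W})
  (f : V -> W) : Prop := forall s, A s -> SY (f @: s).

Definition prod_simp (A B : finType) (SA : pred {set A}) (SB : pred {set B})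
  : pred {set A * B} :=
  fun s => [&& s != set0, SA (fst @: s) & SB (snd @: s)].

(* n-fold categorical product X^n, vertices = n-tuples (finite functions) *)
Definition pow_simp (n : nat) (V : finType) (S : pred {set V})
  : pred {set {ffun 'I_n -> V}} :=
  fun s => (s != set0) && [forall i : 'I_n, S ((fun f : {ffun 'I_n -> V} => f i) @: s)].

(* the complex I_m on vertices 0..m with edges {i,i+1} *)
Definition Im_simp (m : nat) : pred {set 'I_m.+1} :=
  fun s => [exists i : 'I_m.+1, s == [set i]] ||
           [exists i : 'I_m.+1, exists j : 'I_m.+1,
              (nat_of_ord j == (nat_of_ord i).+1) && (s == [set i; j])].

Definition subcomplex (V : finType) (S A : pred {set V}) : Prop :=
  (forall s, A s -> S s) /\
  (forall s t : {set V}, A s -> t \subset s -> t != set0 -> A t).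

Definition contiguous (V W : finType) (A : pred {set V}) (SY : pred {set W})
  (f g : V -> W) : Prop := forall s, A s -> SY ((f @: s) :|: (g @: s)).

Definition csim (V W : finType) (A : pred {set V}) (SY : pred {set W})
  (f g : V -> W) : Prop :=
  clos_refl_trans (V -> W) (fun f1 f2 => [/\ smap A SY f1, smap A SY f2 & contiguous A SY f1 f2]) f g.

Definition SD_le (V W : finType) (I : Type) (S : pred {set V}) (SY : pred {set W})
  (phis : I -> V -> W) (k : nat) : Prop :=
  exists Xs : 'I_k.+1 -> pred {set V},
    [/\ forall j, subcomplex S (Xs j),
        forall s, S s -> exists j, Xs j s &
        forall i l j, csim (Xs j) SY (phis i) (phis l)].

Definition SD (V W : finType) (I : Type) (S : pred {set V}) (SY : pred {set W})
  (phis : I -> V -> W) : nat :=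
  epsilon (inhabits 0%N)
    (fun k => SD_le S SY phis k /\ forall j, SD_le S SY phis j -> (k <= j)%N).

Definition TCn (n : nat) (X Y : fcomplex) (phi : vtx X -> vtx Y) : nat :=
  SD (@pow_simp n _ (simp X)) (simp Y) (fun (i : 'I_n) (x : {ffun 'I_n -> vtx X}) => phi (x i)).

Definition finite_fibration (X Y : fcomplex) (phi : vtx X -> vtx Y) : Prop :=
  forall (M : fcomplex) (m : nat), (0 < m)%N ->
  forall (g : vtx M -> vtx X) (G : vtx M * 'I_m.+1 -> vtx Y),
    smap (simp M) (simp X) g ->
    smap (prod_simp (simp M) (@Im_simp m)) (simp Y) G ->
    (forall v, phi (g v) = G (v, ord0)) ->
    exists Gt : vtx M * 'I_m.+1 -> vtx X,
      [/\ smap (prod_simp (simp M) (@Im_simp m)) (simp X) Gt,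
          forall v, Gt (v, ord0) = g v &
          forall p, phi (Gt p) = G p].

Definition surj_sfibration (X Y : fcomplex) (phi : vtx X -> vtx Y) : Prop :=
  [/\ smap (simp X) (simp Y) phi, forall y, exists x, phi x = y & finite_fibration phi].

(* Main.v *)
Require Import Defs.
From Stdlib Require Import ClassicalEpsilon Relation_Operators Classical FunctionalExtensionality.
From Stdlib Require Wf_nat.
From mathcomp Require Import all_boot.
Set Implicit Arguments. Unset Strict Implicit. Unset Printing Implicit Defensive.

Lemma SD_spec (V W : finType) (I : Type) (S : pred {set V}) (SY : pred {set W})
  (phis : I -> V -> W) :
  (exists k, SD_le S SY phis k) ->
  SD_le S SY phis (SD S SY phis) /\ forall j, SD_le S SY phis j -> (SD S SY phis <= j)%N.
Proof.
move=> ex.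
have ex2 : exists k, SD_le S SY phis k /\ forall j, SD_le S SY phis j -> (k <= j)%N.
  have [k [[Pk Hk] _]] := Wf_nat.dec_inh_nat_subset_has_unique_least_element
    _ (fun n => classic (SD_le S SY phis n)) ex.
  exists k; split=> // j Pj; apply/leP; exact: Hk.
exact: (epsilon_spec (inhabits 0%N) _ ex2).
Qed.

Lemma csim_post (V W Z : finType) (A : pred {set V}) (SY : pred {set W}) (SZ : pred {set Z})
  (f g : V -> W) (psi : W -> Z) :
  smap SY SZ psi -> csim A SY f g -> csim A SZ (psi \o f) (psi \o g).
Proof.
move=> hpsi H; induction H as [f1 f2 [h1 h2 hc]| f1 | f1 f2 f3 _ IH1 _ IH2].
- apply: rt_step; split=> s As.
  + rewrite imset_comp; apply: hpsi; exact: h1.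
  + rewrite imset_comp; apply: hpsi; exact: h2.
  + rewrite (imset_comp psi f1) (imset_comp psi f2) -imsetU; apply: hpsi; exact: hc.
- exact: rt_refl.
- exact: rt_trans IH1 IH2.
Qed.

Lemma csim_pre (V V' W : finType) (A' : pred {set V'}) (A : pred {set V}) (SY : pred {set W})
  (f g : V' -> W) (h : V -> V') :
  (forall t, A t -> A' (h @: t)) -> csim A' SY f g -> csim A SY (f \o h) (g \o h).
Proof.
move=> hh H; induction H as [f1 f2 [h1 h2 hc]| f1 | f1 f2 f3 _ IH1 _ IH2].
- apply: rt_step; split=> s As.
  + rewrite imset_comp; apply: h1; exact: hh.
  + rewrite imset_comp; apply: h2; exact: hh.
  + rewrite (imset_comp f1 h) (imset_comp f2 h); apply: hc; exact: hh.
- exact: rt_refl.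
- exact: rt_trans IH1 IH2.
Qed.

Lemma SD_le_post (V W Z : finType) I (S : pred {set V}) (SY : pred {set W}) (SZ : pred {set Z})
  (phis : I -> V -> W) (psi : W -> Z) k :
  smap SY SZ psi -> SD_le S SY phis k -> SD_le S SZ (fun i x => psi (phis i x)) k.
Proof.
move=> hp [Xs [h1 h2 h3]]; exists Xs; split=> // i l j; exact: (csim_post hp (h3 i l j)).
Qed.

Lemma SD_le_pre (V V' W : finType) I (S : pred {set V}) (S' : pred {set V'}) (SY : pred {set W})
  (phis : I -> V' -> W) (h : V -> V') k :
  (forall s t : {set V}, S s -> t \subset s -> t != set0 -> S t) ->
  smap S S' h -> SD_le S' SY phis k -> SD_le S SY (fun i x => phis i (h x)) k.
Proof.
move=> Scl hh [Xs [h1 h2 h3]].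
exists (fun j t => S t && Xs j (h @: t)); split.
- move=> j; split; first by move=> s /andP[].
  move=> s t /andP[Ss Xss] ts t0; rewrite (Scl s t) //=.
  have [_ cl] := h1 j; apply: (cl (h @: s)) => //; first exact: imsetS.
  by rewrite imset_eq0.
- move=> s Ss; have [j Xj] := h2 _ (hh _ Ss); exists j; by rewrite /= Ss Xj.
- move=> i l j; apply: (csim_pre (A' := Xs j)) => //; by move=> t /andP[].
Qed.

Lemma pow_closed n (V : finType) (S : pred {set V}) : is_complex S ->
  forall s t : {set {ffun 'I_n -> V}}, @pow_simp n _ S s -> t \subset s -> t != set0 -> @pow_simp n _ S t.
Proof.
move=> [_ _ cl] s t /andP[_ /forallP hs] ts t0; rewrite /pow_simp t0 /=; apply/forallP=> i.
apply: (cl _ _ (hs i)); first exact: imsetS. by rewrite imset_eq0.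
Qed.

Lemma pow_map n (X Y : finType) SX SY (phi : X -> Y) : smap SX SY phi ->
  smap (@pow_simp n _ SX) (@pow_simp n _ SY) (fun x : {ffun 'I_n -> X} => [ffun i => phi (x i)]).
Proof.
move=> hp s /andP[s0 /forallP hs]; rewrite /pow_simp imset_eq0 s0 /=; apply/forallP=> i.
have -> : (fun f : {ffun 'I_n -> Y} => f i) @: ((fun x : {ffun 'I_n -> X} => [ffun j => phi (x j)]) @: s)
   = phi @: ((fun x : {ffun 'I_n -> X} => x i) @: s).
  by rewrite -!imset_comp; apply: eq_imset => x /=; rewrite ffunE.
exact: hp.
Qed.

Lemma pow_phis n (X Y : finType) SX SY (f : X -> Y) : smap SX SY f ->
  forall (i : 'I_n) t, @pow_simp n _ SX t -> SY ((fun x : {ffun 'I_n -> X} => f (x i)) @: t).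
Proof.
move=> hp i t /andP[_ /forallP hs].
have -> : (fun x : {ffun 'I_n -> X} => f (x i)) @: t = f @: ((fun x : {ffun 'I_n -> X} => x i) @: t).
  by rewrite -imset_comp.
exact: hp.
Qed.

Lemma imset_cst (V W : finType) (t : {set V}) (a : W) : t != set0 -> (fun _ => a) @: t = [set a].
Proof.
case/set0Pn=> x xt; apply/setP=> y; rewrite inE; apply/imsetP/eqP.
- by case=> z _ ->.
- by move=> ->; exists x.
Qed.

Lemma face_csim (V W : finType) (S : pred {set V}) (SY : pred {set W}) (A : pred {set V})
  (s0 : {set V}) (f g : V -> W) :
  is_complex SY -> edge_connected SY ->
  (forall t, S t -> SY (f @: t)) -> (forall t, S t -> SY (g @: t)) ->
  (forall t, S t -> t != set0) ->
  (forall t, A t -> [&& S t, S s0 & t \subset s0]) ->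
  csim A SY f g.
Proof.
move=> [_ Y1 Ycl] conY hf hg hne hA.
case: (classic (S s0)) => Ss0; last first.
  apply: rt_step; split=> t /hA /and3P[_ ? _]; contradiction.
have [x0 x0s] := set0Pn _ (hne _ Ss0).
have smc : forall a, smap A SY (fun _ => a).
  by move=> a t /hA /and3P[St _ _]; rewrite imset_cst ?hne.
have smf : smap A SY f by move=> t /hA /and3P[St _ _]; apply: hf.
have smg : smap A SY g by move=> t /hA /and3P[St _ _]; apply: hg.
have ctc : forall h, (forall t, S t -> SY (h @: t)) ->
    contiguous A SY h (fun _ => h x0) /\ contiguous A SY (fun _ => h x0) h.
  move=> h hh; suff H : forall t, A t -> SY (h @: t :|: [set h x0]).
    split=> t At; (have tn : t != set0 by case/and3P: (hA _ At) => St _ _; apply: hne);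
      rewrite imset_cst //; [exact: H | rewrite setUC; exact: H].
  move=> t /hA /and3P[St _ ts0]; apply: (Ycl (h @: s0)); first by apply: hh.
  + by rewrite subUset imsetS //= sub1set imset_f.
  + by apply/set0Pn; exists (h x0); rewrite !inE eqxx orbT.
have key : forall a b, connect (fun a b => SY [set a; b]) a b ->
    csim A SY (fun _ => a) (fun _ => b).
  move=> a b /connectP [p pth ->]; elim: p a pth => [|c p IH] a /=.
    by move=> _; exact: rt_refl.
  case/andP => e pth'; apply: rt_trans (IH _ pth'); apply: rt_step; split=> // t At.
  have tn : t != set0 by case/and3P: (hA _ At) => St _ _; apply: hne.
  by rewrite !imset_cst.
have [cf1 _] := ctc f hf; have [_ cg2] := ctc g hg.
apply: rt_trans (rt_step _ _ _ _ (And3 smf (smc (f x0)) cf1)) _.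
apply: rt_trans (key _ _ (conY (f x0) (g x0))) _.
exact: rt_step.
Qed.

Lemma SD_exists (V W : finType) I (S : pred {set V}) (SY : pred {set W}) (phis : I -> V -> W) :
  is_complex SY -> edge_connected SY ->
  (forall s t : {set V}, S s -> t \subset s -> t != set0 -> S t) ->
  (forall t, S t -> t != set0) ->
  (forall i t, S t -> SY (phis i @: t)) ->
  exists k, SD_le S SY phis k.
Proof.
move=> cY conY clS neS hphi.
pose e := enum [set: {set V}].
exists (size e).
exists (fun j t => [&& S t, S (nth set0 e j) & t \subset nth set0 e j]); split.
- move=> j; split; first by move=> s /and3P[].
  move=> s t /and3P[Ss Ss0 ss0] ts t0; rewrite (clS s t) // Ss0 /=; exact: subset_trans ts ss0.
- move=> s Ss.
  have hi0 : (index s e < size e)%N by rewrite index_mem mem_enum in_setT.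
  have hi : (index s e < (size e).+1)%N by exact: ltnW.
  exists (Ordinal hi) => /=; by rewrite nth_index ?mem_enum ?in_setT // Ss subxx.
- move=> i l j; apply: (face_csim (S := S) (s0 := nth set0 e j)) => //; exact: hphi.
Qed.

Theorem theorem5p4 (L N K : fcomplex) (phi : vtx L -> vtx N) (psi : vtx N -> vtx K)
  (n : nat) :
  surj_sfibration phi -> surj_sfibration psi -> (2 <= n)%N ->
  (TCn n (psi \o phi) <= minn (TCn n phi) (TCn n psi))%N.
Proof.
move=> [sphi _ _] [spsi _ _] _.
have spp : smap (simp L) (simp K) (psi \o phi).
  by move=> s Ss; rewrite imset_comp; apply: spsi; apply: sphi.
have ne : forall (X : fcomplex) t, @pow_simp n _ (simp X) t -> t != set0.
  by move=> X t /andP[].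
have ex : forall (X Y : fcomplex) (f : vtx X -> vtx Y), smap (simp X) (simp Y) f ->
    exists k, SD_le (@pow_simp n _ (simp X)) (simp Y) (fun (i : 'I_n) x => f (x i)) k.
  move=> X Y f hf; apply: SD_exists.
  - exact: simp_complex.
  - exact: simp_connected.
  - exact: pow_closed (simp_complex X).
  - exact: ne.
  - exact: pow_phis.
have [_ Hpp] := SD_spec (ex _ _ _ spp).
have [Hp _] := SD_spec (ex _ _ _ sphi).
have [Hs _] := SD_spec (ex _ _ _ spsi).
rewrite /TCn leq_min; apply/andP; split; apply: Hpp.
- exact: (SD_le_post spsi Hp).
- have := SD_le_pre (pow_closed (simp_complex L)) (pow_map (n := n) sphi) Hs.
  have -> : (fun (i : 'I_n) (x : {ffun 'I_n -> vtx L}) =>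
      (fun (i0 : 'I_n) (x0 : {ffun 'I_n -> vtx N}) => psi (x0 i0)) i [ffun i1 => phi (x i1)])
    = (fun (i : 'I_n) (x : {ffun 'I_n -> vtx L}) => (psi \o phi) (x i)).
    apply: functional_extensionality => i; apply: functional_extensionality => x.
    by rewrite /= ffunE.
  by [].
Qed.
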